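(* Let $F$, $H$, $X$, $\Omega$, $Q$ and the sequences generated by the IneIREG method be as described in the context, and suppose $H$ is $\mu$-strongly monotone for some $\mu>0$. Suppose $\eta_k\equiv\eta>0$; $\lambda_k\in[\underline\lambda,\overline\lambda]$ for all $k\ge0$ with $0<\underline\lambda\le\overline\lambda<1/L$, $L:=L_F+\eta L_H$; and $\alpha_0\in[0,1]$ and $\alpha_{k+1}\le(1-\beta_k)\alpha_k$ for all $k\ge0$, where $\beta_k:=\big(\frac{1}{1-\lambda_k^2L^2}+\frac{1}{2\lambda_k\eta\mu}\big)^{-1}$. Define $p_{-1}:=1$, $p_k:=\big(\prod_{i=0}^k(1-\beta_i)\big)^{-1}$ for $k\ge0$, for $k\ge1$ $\Lambda_k:=\sum_{j=0}^{k-1}\lambda_j\eta p_j$ and $\overline y_k:=\Lambda_k^{-1}\sum_{j=0}^{k-1}\lambda_j\eta p_jy_j$, and $\beta:=\big(\frac{1}{1-\overline\lambda^2L^2}+\frac{1}{2\underline\lambda\eta\mu}\big)^{-1}\in(0,1)$. Then for all $k\ge1$, $$-B_H\,\mathrm{dist}(\overline y_k,Q)\le\mathrm{Gap}(\overline y_k,H,Q)\le\frac{(1-\beta)^k}{2\underline\lambda\eta}\Big(D_X^2+\sum_{j=0}^{k-1}p_{j-1}\delta_j\Big).$$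
   Context: Work in $\mathbb{R}^n$ with Euclidean inner product $\langle\cdot,\cdot\rangle$ and norm $\|\cdot\|$. The maps $F\colon \mathrm{Dom}\,F\to\mathbb{R}^n$ and $H\colon\mathrm{Dom}\,H\to\mathbb{R}^n$ are monotone and Lipschitz continuous with constants $L_F>0$ and $L_H>0$; $H$ is $\mu$-strongly monotone means $\langle H(x)-H(y),x-y\rangle\ge\mu\|x-y\|^2$ for all $x,y\in\mathrm{Dom}\,H$. $X$ is a nonempty compact convex set and $\Omega$ a nonempty closed convex set with $X\subset\Omega\subset\mathrm{Dom}\,F\cap\mathrm{Dom}\,H$; $P_X,P_\Omega$ denote orthogonal projections. $Q:=\{x\in X:\langle F(x),y-x\rangle\ge0\ \forall y\in X\}$ is assumed nonempty. $D_X:=\sup_{x,y\in X}\|x-y\|$, $B_H:=\sup_{x\in Q}\|H(x)\|$, $\mathrm{dist}(y,Q)$ is the Euclidean distance to $Q$. $\mathrm{Gap}(z,H,Q):=\sup_{x\in Q}\langle H(x),z-x\rangle$. IneIREG method: start with $x_0=x_{-1}\in X$; for $k=0,1,\dots$, with parameters $\alpha_k\ge0$, $\lambda_k>0$, $\eta_k>0$, set $w_k=x_k+\alpha_k(x_k-x_{k-1})$, $w'_k=P_\Omega(w_k)$, $y_k=P_X\big(w_k-\lambda_k(F(w'_k)+\eta_kH(w'_k))\big)$, $x_{k+1}=P_X\big(w_k-\lambda_k(F(y_k)+\eta_kH(y_k))\big)$. Also $\delta_k:=\alpha_k(1+\alpha_k)\|x_k-x_{k-1}\|^2$ for $k\ge0$.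 *)

(* Defs.v *)
From HB Require Import structures.
From mathcomp Require Import all_boot all_order all_algebra.
From mathcomp Require Import all_classical all_reals all_analysis.
Set Implicit Arguments. Unset Strict Implicit. Unset Printing Implicit Defensive.
Import Order.TTheory GRing.Theory Num.Theory.
Local Open Scope classical_set_scope.
Local Open Scope ring_scope.

Section Defs.
Variables (R : realType) (n : nat).
Notation V := 'rV[R]_n.

Definition dotp (u v : V) : R := \sum_(i < n) u 0 i * v 0 i.
Definition enorm (u : V) : R := Num.sqrt (dotp u u).

(* topology of R^n (product topology, via the regular ring R^o) *)
Definition vcompact (A : set V) : Prop := compact (A : set 'rV[R^o]_n).
Definition vclosed (A : set V) : Prop := closed (A : set 'rV[R^o]_n).

Definition is_projection (A : set V) (P : V -> V) : Prop :=
  forall z, A (P z) /\ forall x, A x -> enorm (z - P z) <= enorm (z - x).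

Definition ineq_monotone (D : set V) (G : V -> V) : Prop :=
  forall x y, D x -> D y -> 0 <= dotp (G x - G y) (x - y).

Definition ineq_smonotone (D : set V) (G : V -> V) (mu : R) : Prop :=
  forall x y, D x -> D y -> mu * enorm (x - y) ^+ 2 <= dotp (G x - G y) (x - y).

Definition ineq_lipschitz (D : set V) (G : V -> V) (L : R) : Prop :=
  forall x y, D x -> D y -> enorm (G x - G y) <= L * enorm (x - y).

Definition VIsol (F : V -> V) (X : set V) : set V :=
  [set x | X x /\ forall y, X y -> 0 <= dotp (F x) (y - x)].

Definition setdiam (X : set V) : R :=
  sup [set r | exists x y, X x /\ X y /\ r = enorm (x - y)].

Definition normbound (H : V -> V) (Q : set V) : R :=
  sup [set r | exists x, Q x /\ r = enorm (H x)].

Definition setdist (y : V) (Q : set V) : R :=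
  inf [set r | exists x, Q x /\ r = enorm (y - x)].

Definition Gap (z : V) (H : V -> V) (Q : set V) : R :=
  sup [set r | exists x, Q x /\ r = dotp (H x) (z - x)].

(* x k = x_k, and x_{-1} = x_0, so x_{k-1} = x (k.-1) for every k >= 0 *)
Definition inertial (x : nat -> V) (alpha : nat -> R) (k : nat) : V :=
  x k + alpha k *: (x k - x k.-1).

Definition ineq_delta (x : nat -> V) (alpha : nat -> R) (k : nat) : R :=
  alpha k * (1 + alpha k) * enorm (x k - x k.-1) ^+ 2.

Definition IneIREG (F H : V -> V) (PX POm : V -> V)
  (alpha lambda eta : nat -> R) (x y : nat -> V) : Prop :=
  forall k,
    y k = PX (inertial x alpha k - lambda k *:
               (F (POm (inertial x alpha k)) + eta k *: H (POm (inertial x alpha k)))) /\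
    x k.+1 = PX (inertial x alpha k - lambda k *: (F (y k) + eta k *: H (y k))).

End Defs.

Definition betak (R : realType) (lam L eta mu : R) : R :=
  ((1 - lam ^+ 2 * L ^+ 2)^-1 + (2 * lam * eta * mu)^-1)^-1.

(* pprev beta j = p_{j-1} = (prod_{i<j} (1 - beta_i))^{-1}; p_{-1} = 1 *)
Definition pprev (R : realType) (beta : nat -> R) (j : nat) : R :=
  (\prod_(i < j) (1 - beta i))^-1.

Definition pk (R : realType) (beta : nat -> R) (k : nat) : R := pprev beta k.+1.

Definition ineq_Lambda (R : realType) (lambda : nat -> R) (eta : R) (beta : nat -> R) (k : nat) : R :=
  \sum_(j < k) lambda j * eta * pk beta j.

Definition ybar (R : realType) (n : nat) (lambda : nat -> R) (eta : R) (beta : nat -> R)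
  (y : nat -> 'rV[R]_n) (k : nat) : 'rV[R]_n :=
  (ineq_Lambda lambda eta beta k)^-1 *: \sum_(j < k) (lambda j * eta * pk beta j) *: y j.

(* Main.v *)
Require Import Defs.
From HB Require Import structures.
From mathcomp Require Import all_boot all_order all_algebra.
From mathcomp Require Import all_classical all_reals all_analysis.
From mathcomp Require Import ring lra.
Import Order.TTheory GRing.Theory Num.Theory.
Local Open Scope classical_set_scope.
Local Open Scope ring_scope.

Module Aux.
Set Implicit Arguments. Unset Strict Implicit. Unset Printing Implicit Defensive.

Section Aux.
Variables (R : realType) (n : nat).
Implicit Types u v w : 'rV[R]_n.

Lemma dotpC u v : dotp u v = dotp v u.
Proof. by apply: eq_bigr => i _; rewrite mulrC. Qed.
Lemma dotpDl u v w : dotp (u + v) w = dotp u w + dotp v w.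
Proof. by rewrite /dotp -big_split; apply: eq_bigr => i _; rewrite mxE mulrDl. Qed.
Lemma dotpNl u w : dotp (- u) w = - dotp u w.
Proof. by rewrite /dotp -sumrN; apply: eq_bigr => i _; rewrite mxE mulNr. Qed.
Lemma dotpZl a u w : dotp (a *: u) w = a * dotp u w.
Proof. by rewrite /dotp mulr_sumr; apply: eq_bigr => i _; rewrite mxE mulrA. Qed.
Lemma dotpBl u v w : dotp (u - v) w = dotp u w - dotp v w.
Proof. by rewrite dotpDl dotpNl. Qed.
Lemma dotpDr u v w : dotp w (u + v) = dotp w u + dotp w v.
Proof. by rewrite dotpC dotpDl !(dotpC w). Qed.
Lemma dotpNr u w : dotp w (- u) = - dotp w u.
Proof. by rewrite dotpC dotpNl dotpC. Qed.
Lemma dotpBr u v w : dotp w (u - v) = dotp w u - dotp w v.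
Proof. by rewrite dotpDr dotpNr. Qed.
Lemma dotpZr a u w : dotp w (a *: u) = a * dotp w u.
Proof. by rewrite dotpC dotpZl dotpC. Qed.
Lemma dotp_ge0 u : 0 <= dotp u u.
Proof. by apply: sumr_ge0 => i _; rewrite -expr2 sqr_ge0. Qed.
Lemma enorm_sq u : enorm u ^+ 2 = dotp u u.
Proof. by rewrite sqr_sqrtr // dotp_ge0. Qed.
Lemma enorm_ge0 u : 0 <= enorm u.
Proof. exact: sqrtr_ge0. Qed.
Lemma dotp_sumr I (r : seq I) (P : pred I) (F : I -> 'rV[R]_n) u :
  dotp u (\sum_(i <- r | P i) F i) = \sum_(i <- r | P i) dotp u (F i).
Proof.
elim/big_rec2: _ => [|i s y Pi <-]; first by apply: big1 => j _; rewrite mxE mulr0.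
by rewrite dotpDr.
Qed.

Lemma dotp_quad u v t : dotp (u + t *: v) (u + t *: v)
  = dotp u u + 2 * t * dotp u v + t ^+ 2 * dotp v v.
Proof.
rewrite !(dotpDl, dotpDr, dotpZl, dotpZr) (dotpC v u). by rewrite expr2; ring.
Qed.

Lemma CS u v : dotp u v ^+ 2 <= dotp u u * dotp v v.
Proof.
have q t := dotp_ge0 (u + t *: v); have hu := dotp_ge0 u; have hv := dotp_ge0 v.
have [v0|vp] := eqVneq (dotp v v) 0.
  have [->|uv] := eqVneq (dotp u v) 0; first by rewrite expr0n /= v0 mulr0.
  have := q (- (dotp u u + 1) / (2 * dotp u v)); rewrite dotp_quad v0 mulr0 addr0.
  have -> : 2 * (- (dotp u u + 1) / (2 * dotp u v)) * dotp u v = - (dotp u u + 1).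
    by field; rewrite uv.
  lra.
have vp' : 0 < dotp v v by rewrite lt_neqAle eq_sym vp hv.
have := q (- dotp u v / dotp v v); rewrite dotp_quad.
set c := dotp u v; set b := dotp v v => h.
have e : (- c / b) ^+ 2 * b = c ^+ 2 / b by field; rewrite gt_eqF.
move: h; rewrite e => h.
have : 0 <= dotp u u - c ^+ 2 / b.
  suff -> : dotp u u - c ^+ 2 / b = dotp u u + 2 * (- c / b) * c + c ^+ 2 / b by [].
  by field; rewrite gt_eqF.
rewrite subr_ge0 ler_pdivrMr // => H; by rewrite mulrC.
Qed.

Lemma CSn u v : `|dotp u v| <= enorm u * enorm v.
Proof.
rewrite /enorm -sqrtrM ?dotp_ge0 // -(sqrtr_sqr (dotp u v)) ler_sqrt ?CS //.
by rewrite mulr_ge0 ?dotp_ge0.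
Qed.

Lemma enormD u v : enorm (u + v) <= enorm u + enorm v.
Proof.
rewrite -(ler_pXn2r (n:=2)) ?nnegrE ?addr_ge0 ?enorm_ge0 //.
rewrite enorm_sq sqrrD !enorm_sq dotpDl !dotpDr (dotpC v u).
have := CSn u v; rewrite ler_norml => /andP[_ h]. lra.
Qed.

Lemma enormN u : enorm (- u) = enorm u.
Proof. by rewrite /enorm dotpNl dotpNr opprK. Qed.

Lemma enormB u v : enorm (u - v) = enorm (v - u).
Proof. by rewrite -enormN opprB. Qed.

End Aux.


Section Aux2.
Variables (R : realType) (n : nat).
Implicit Types u v w : 'rV[R]_n.

Lemma enorm_le_dotp u v : enorm u <= enorm v -> dotp u u <= dotp v v.
Proof. by rewrite /enorm ler_sqrt ?dotp_ge0. Qed.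

Lemma proj_vi (A : set 'rV[R]_n) P z x : convex_set A -> is_projection A P -> A x ->
  dotp (z - P z) (x - P z) <= 0.
Proof.
move=> cA hP Ax; have [Ap Hmin] := hP z; set p := P z in Ap Hmin *.
rewrite leNgt; apply/negP => c0.
set c := dotp (z - p) (x - p) in c0; set d := dotp (x - p) (x - p).
have d0 : 0 <= d by apply: dotp_ge0.
pose t := c / (d + c).
have t0 : 0 <= t by rewrite divr_ge0 // ?addr_ge0 // ltW.
have t1 : t <= 1 by rewrite ler_pdivrMr ?mul1r ?lerDr // ltr_wpDl.
have := cA x p (Itv01 t0 t1) (mem_set Ax) (mem_set Ap).
rewrite inE /conv /=.
move=> Aq; have := Hmin _ Aq; move/enorm_le_dotp.
have -> : z - (t *: x + (1 - t) *: p) = (z - p) + (- t) *: (x - p).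
  by rewrite scalerBr scalerBl scale1r scaleNr; apply/rowP => i; rewrite !mxE; ring.
rewrite dotp_quad -/c -/d sqrrN => h.
have h2 : 2 * c <= t * d.
  have : 0 <= t * (t * d - 2 * c) by lra.
  rewrite pmulr_rge0 ?subr_ge0 //; rewrite divr_gt0 // ltr_wpDl //.
have : t * d < c.
  rewrite /t mulrC mulrA ltr_pdivrMr ?ltr_wpDl //; nra.
lra.
Qed.

Lemma vcompact_bounded (X : set 'rV[R]_n) : vcompact X ->
  exists D, forall x y, X x -> X y -> enorm (x - y) <= D.
Proof.
move=> /compact_bounded [M [_ hM]].
have hb := hM (M + 1) ltac:(by rewrite ltrDl).
have ent (x : 'rV[R^o]_n) i : `|x 0 i| <= `|x|.
  have /mapP[j Hj ->] : `|x 0 i| \in [seq `|x k.1 k.2| | k : 'I_1 * 'I_n].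
    by apply/mapP; exists (0, i) => //=; rewrite mem_enum.
  by rewrite [leRHS]/Num.norm /= mx_normrE; apply/bigmax_geP; right => /=; exists j.
exists (Num.sqrt (n%:R * (2 * (M + 1)) ^+ 2)) => x y Xx Xy.
rewrite /enorm ler_sqrt; last by rewrite mulr_ge0 // sqr_ge0.
rewrite /dotp.
rewrite (_ : _ * _ = \sum_(i < n) (2 * (M + 1)) ^+ 2); last by rewrite sumr_const card_ord mulr_natl.
apply: ler_sum => i _; rewrite -expr2 -real_normK ?num_real //.
have M0 : 0 <= M + 1 := le_trans (normr_ge0 _) (le_trans (ent x i) (hb x Xx)).
rewrite lerXn2r ?nnegrE ?normr_ge0 //; first by apply: mulr_ge0.
have -> : (x - y) 0 i = x 0 i - y 0 i by rewrite !mxE.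
apply: (le_trans (ler_normB _ _)).
have := ent x i; have := ent y i; have := hb x Xx; have := hb y Xy.
rewrite /=. lra.
Qed.

End Aux2.


Ltac vid := apply/rowP => ?; rewrite !mxE; ring.

Section Step.
Variables (R : realType) (n : nat).
Implicit Types u v w : 'rV[R]_n.

Lemma dotp_normB u v : dotp (u - v) (u - v) = dotp u u - 2 * dotp u v + dotp v v.
Proof. rewrite !(dotpBl, dotpBr) (dotpC v u); ring. Qed.
Lemma dotp_normD u v : dotp (u + v) (u + v) = dotp u u + 2 * dotp u v + dotp v v.
Proof. rewrite !(dotpDl, dotpDr) (dotpC v u); ring. Qed.
Lemma dotp_sym_sub u v : dotp (u - v) (u - v) = dotp (v - u) (v - u).
Proof. by rewrite -opprB dotpNl dotpNr opprK. Qed.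

Lemma enormZ a u : 0 <= a -> enorm (a *: u) = a * enorm u.
Proof.
move=> a0; rewrite /enorm dotpZl dotpZr mulrA sqrtrM ?mulr_ge0 //.
by rewrite -expr2 sqrtr_sqr ger0_norm.
Qed.

Lemma combo c1 c2 u v : 0 < c1 -> 0 < c2 ->
  (c1^-1 + c2^-1)^-1 * dotp (u + v) (u + v) <= c1 * dotp u u + c2 * dotp v v.
Proof.
move=> h1 h2.
have e : (c1^-1 + c2^-1)^-1 = c1 * c2 / (c1 + c2).
  by field; rewrite ?gt_eqF ?addr_gt0.
rewrite e mulrAC ler_pdivrMr ?addr_gt0 //.
have := dotp_ge0 (c1 *: u - c2 *: v).
rewrite dotp_normB !(dotpZl, dotpZr) dotp_normD => h.
nra.
Qed.

Lemma step (F H : 'rV[R]_n -> 'rV[R]_n) (DomF DomH X Om : set 'rV[R]_n)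
  (PX POm : 'rV[R]_n -> 'rV[R]_n) (LF LH mu eta lam alpha : R)
  (xk xkm x1 yk x : 'rV[R]_n) :
  0 <= LF -> 0 <= LH -> 0 < mu -> 0 < eta -> 0 < lam ->
  lam ^+ 2 * (LF + eta * LH) ^+ 2 < 1 ->
  ineq_monotone DomF F -> ineq_lipschitz DomF F LF ->
  ineq_lipschitz DomH H LH -> ineq_smonotone DomH H mu ->
  convex_set X -> convex_set Om -> X `<=` Om -> Om `<=` DomF `&` DomH ->
  is_projection X PX -> is_projection Om POm ->
  VIsol F X x ->
  let w := xk + alpha *: (xk - xkm) in
  yk = PX (w - lam *: (F (POm w) + eta *: H (POm w))) ->
  x1 = PX (w - lam *: (F yk + eta *: H yk)) ->
  dotp (x1 - x) (x1 - x) <=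
   (1 - betak lam (LF + eta * LH) eta mu) *
     ((1 + alpha) * dotp (xk - x) (xk - x) - alpha * dotp (xkm - x) (xkm - x)
      + alpha * (1 + alpha) * dotp (xk - xkm) (xk - xkm))
   - 2 * lam * eta * dotp (H x) (yk - x).
Proof.
move=> LF0 LH0 mu0 eta0 lam0 lamL monF lipF lipH smonH cX cOm XOm OmD pX pOm [Xx solx].
move=> w ey ex1.
set L := LF + eta * LH.
set w' := POm w.
pose G v := F v + eta *: H v.
have Xy : X yk by rewrite ey; case: (pX (w - lam *: (F w' + eta *: H w'))).
have Xx1 : X x1 by rewrite ex1; case: (pX (w - lam *: (F yk + eta *: H yk))).
have Omw' : Om w' by case: (pOm w).
have [DFy DHy] := OmD _ (XOm _ Xy).
have [DFx DHx] := OmD _ (XOm _ Xx).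
have [DFw' DHw'] := OmD _ Omw'.
have S1 := proj_vi (w - lam *: G yk) cX pX Xx.
rewrite -ex1 in S1.
have S2 := proj_vi (w - lam *: G w') cX pX Xx1.
rewrite -ey in S2.
have S3 := proj_vi w cOm pOm (XOm _ Xy).
rewrite -/w' in S3.
set a1 := dotp (x1 - x) (x1 - x).
set W := dotp (w - x) (w - x).
set wx1 := dotp (w - x1) (w - x1).
set wy := dotp (w - yk) (w - yk).
set yx1 := dotp (yk - x1) (yk - x1).
set g1 := dotp (G yk) (x - yk).
set g2 := dotp (G w') (x1 - yk).
set g3 := dotp (G yk - G w') (yk - x1).
set GG := dotp (G yk - G w') (G yk - G w').
have S1' : a1 <= W - wx1 + 2 * lam * (g1 + g3 - g2).
  have e1 : w - lam *: G yk - x1 = (w - x1) - lam *: G yk by vid.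
  rewrite e1 dotpBl dotpZl in S1.
  have e2 : W = dotp ((w - x1) - (x - x1)) ((w - x1) - (x - x1)).
    by rewrite /W; congr dotp; vid.
  rewrite dotp_normB in e2.
  have e3 : dotp (G yk) (x - x1) = g1 + g3 - g2.
    have -> : x - x1 = (x - yk) + (yk - x1) by vid.
    rewrite dotpDr /g1 /g3 /g2.
    have -> : yk - x1 = - (x1 - yk) by rewrite opprB.
    rewrite dotpBl !dotpNr; ring.
  rewrite e3 in S1. rewrite /a1 /wx1 dotp_sym_sub. lra.
have S2' : wy + yx1 - wx1 <= 2 * lam * g2.
  have e1 : w - lam *: G w' - yk = (w - yk) - lam *: G w' by vid.
  rewrite e1 dotpBl dotpZl -/g2 in S2.
  have e2 : wx1 = dotp ((w - yk) - (x1 - yk)) ((w - yk) - (x1 - yk)).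
    by rewrite /wx1; congr dotp; vid.
  rewrite dotp_normB -/wy (dotp_sym_sub x1 yk) -/yx1 in e2.
  lra.
have S3' : dotp (yk - w') (yk - w') <= wy.
  have e2 : wy = dotp ((w - w') - (yk - w')) ((w - w') - (yk - w')).
    by rewrite /wy; congr dotp; vid.
  rewrite dotp_normB in e2.
  have := dotp_ge0 (w - w'). lra.
have S4 : GG <= L ^+ 2 * wy.
  have h : enorm (G yk - G w') <= L * enorm (yk - w').
    have -> : G yk - G w' = (F yk - F w') + eta *: (H yk - H w') by rewrite /G; vid.
    apply: (le_trans (enormD _ _)); rewrite enormZ; last exact: ltW.
    have := lipF _ _ DFy DFw'; have := lipH _ _ DHy DHw'.
    rewrite /L mulrDl -mulrA => h1 h2; apply: lerD => //.
    by rewrite ler_pM2l.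
  have h' : GG <= L ^+ 2 * dotp (yk - w') (yk - w').
    rewrite /GG -!enorm_sq -exprMn lerXn2r ?nnegrE ?enorm_ge0 //.
    by rewrite mulr_ge0 ?enorm_ge0 // addr_ge0 // mulr_ge0 // ltW.
  apply: (le_trans h'); apply: ler_wpM2l => //; exact: sqr_ge0.
have S5 : 2 * lam * g3 <= lam ^+ 2 * GG + yx1.
  have := dotp_ge0 (lam *: (G yk - G w') - (yk - x1)).
  rewrite dotp_normB !(dotpZl, dotpZr) -/GG -/g3 -/yx1 => h.
  rewrite expr2. lra.
have S6 : a1 <= W - (1 - lam ^+ 2 * L ^+ 2) * wy + 2 * lam * g1.
  have : lam ^+ 2 * GG <= lam ^+ 2 * (L ^+ 2 * wy) by apply: ler_wpM2l; [exact: sqr_ge0|].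
  lra.
set B := dotp (yk - x) (yk - x).
set gH := dotp (H x) (yk - x).
have S7 : g1 <= - eta * (mu * B + gH).
  have m1 := monF _ _ DFy DFx.
  have v1 := solx _ Xy.
  have m2 := smonH _ _ DHy DHx.
  rewrite enorm_sq -/B in m2.
  have e : g1 = - dotp (F yk) (yk - x) - eta * dotp (H yk) (yk - x).
    rewrite /g1 /G dotpDl dotpZl -mulrN -dotpNr -dotpNr opprB; ring.
  rewrite dotpBl in m1.
  rewrite dotpBl -/gH in m2.
  rewrite e.
  have : eta * (mu * B) <= eta * (dotp (H yk) (yk - x) - gH) by rewrite ler_pM2l.
  lra.
have c1p : 0 < 1 - lam ^+ 2 * L ^+ 2 by rewrite subr_gt0.
have c2p : 0 < 2 * lam * eta * mu by rewrite !mulr_gt0.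
have S8 : betak lam L eta mu * W <= (1 - lam ^+ 2 * L ^+ 2) * wy + (2 * lam * eta * mu) * B.
  have -> : W = dotp ((w - yk) + (yk - x)) ((w - yk) + (yk - x)) by rewrite /W; congr dotp; vid.
  exact: combo.
have S9 : 2 * lam * g1 <= - 2 * lam * eta * mu * B - 2 * lam * eta * gH.
  have : 2 * lam * g1 <= 2 * lam * (- eta * (mu * B + gH)) by rewrite ler_pM2l ?mulr_gt0.
  move=> h; apply: (le_trans h); rewrite le_eqVlt; apply/orP; left; apply/eqP; ring.
have eW : W = (1 + alpha) * dotp (xk - x) (xk - x) - alpha * dotp (xkm - x) (xkm - x)
      + alpha * (1 + alpha) * dotp (xk - xkm) (xk - xkm).
  have -> : W = dotp ((1 + alpha) *: (xk - x) - alpha *: (xkm - x))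
                     ((1 + alpha) *: (xk - x) - alpha *: (xkm - x)).
    by rewrite /W; congr dotp; rewrite /w; vid.
  have -> : xk - xkm = (xk - x) - (xkm - x) by vid.
  rewrite (dotp_normB ((1 + alpha) *: (xk - x))) (dotp_normB (xk - x)) !(dotpZl, dotpZr); ring.
rewrite -eW.
have : (1 - betak lam L eta mu) * W = W - betak lam L eta mu * W by ring.
lra.
Qed.

End Step.


Lemma telescope (R : realType) (A al be d c g Pn : nat -> R) (D2 : R) :
  (forall j, 0 <= A j <= D2) -> (forall j, 0 <= al j) -> al 0%N <= 1 ->
  Pn 0%N = 1 -> (forall j, 0 < Pn j) -> (forall j, Pn j.+1 * (1 - be j) = Pn j) ->
  (forall j, 0 < 1 - be j) -> (forall j, al j.+1 <= (1 - be j) * al j) ->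
  (forall j, A j.+1 <= (1 - be j) * ((1 + al j) * A j - al j * A j.-1 + d j) - 2 * c j * g j) ->
  forall K, 2 * (\sum_(j < K) c j * Pn j.+1 * g j) + Pn K * (A K - al K * A K.-1)
     <= \sum_(j < K) Pn j * d j + D2 * (1 - Pn K * al K).
Proof.
move=> hA hal hal0 P0 Pp Prec bp alrec st.
elim=> [|K IH].
  rewrite !big_ord0 P0 /= !mul1r mulr0 !add0r.
  have [a0 aD] := andP (hA 0%N).
  have : (1 - al 0%N) * A 0%N <= (1 - al 0%N) * D2 by apply: ler_wpM2l; lra.
  lra.
rewrite !big_ord_recr /=.
have h := st K.
have PK := Pp K; have PK1 := Pp K.+1; have eK := Prec K.
have h2 : Pn K.+1 * A K.+1 <= Pn K.+1 * ((1 - be K) * ((1 + al K) * A K - al K * A K.-1 + d K) - 2 * c K * g K).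
  by rewrite ler_pM2l.
have e3 : Pn K.+1 * ((1 - be K) * ((1 + al K) * A K - al K * A K.-1 + d K) - 2 * c K * g K)
   = Pn K * ((1 + al K) * A K - al K * A K.-1 + d K) - 2 * (c K * Pn K.+1 * g K).
  by rewrite -eK; ring.
rewrite e3 in h2.
have cf : Pn K.+1 * al K.+1 <= Pn K * al K.
  rewrite -eK -mulrA ler_pM2l //; exact: alrec.
have [a0 aD] := andP (hA K).
have : (Pn K * al K - Pn K.+1 * al K.+1) * A K <= (Pn K * al K - Pn K.+1 * al K.+1) * D2.
  by apply: ler_wpM2l; lra.
lra.
Qed.


Lemma inv_le (R : realFieldType) (a b : R) : 0 < a -> a <= b -> b^-1 <= a^-1.
Proof. move=> a0 ab; rewrite lef_pV2 ?posrE //; exact: lt_le_trans ab. Qed.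

Lemma beta_bounds (R : realType) (lam L eta mu : R) :
  0 < lam -> 0 < L -> 0 < eta -> 0 < mu -> lam * L < 1 ->
  0 < betak lam L eta mu /\ betak lam L eta mu < 1.
Proof.
move=> l0 L0 e0 m0 lL.
have c1 : 0 < 1 - lam ^+ 2 * L ^+ 2.
  rewrite subr_gt0 -exprMn expr2; have := mulr_ge0 (ltW l0) (ltW L0); nra.
have c1' : 1 - lam ^+ 2 * L ^+ 2 <= 1.
  rewrite lerBlDr lerDl; apply: mulr_ge0; exact: sqr_ge0.
have c2 : 0 < 2 * lam * eta * mu by rewrite !mulr_gt0.
have i1 : 1 <= (1 - lam ^+ 2 * L ^+ 2)^-1 by rewrite -[X in X <= _]invr1; apply: inv_le.
have i2 : 0 < (2 * lam * eta * mu)^-1 by rewrite invr_gt0.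
rewrite /betak; split; first by rewrite invr_gt0; lra.
rewrite invf_lt1; lra.
Qed.

Lemma beta_mono (R : realType) (lam lo hi L eta mu : R) :
  0 < lo -> lo <= lam -> lam <= hi -> 0 < L -> 0 < eta -> 0 < mu -> hi * L < 1 ->
  ((1 - hi ^+ 2 * L ^+ 2)^-1 + (2 * lo * eta * mu)^-1)^-1 <= betak lam L eta mu.
Proof.
move=> l0 llo lhi L0 e0 m0 hL.
have c1 : 0 < 1 - hi ^+ 2 * L ^+ 2.
  rewrite subr_gt0 -exprMn expr2; have := mulr_ge0 (ltW (lt_le_trans l0 (le_trans llo lhi))) (ltW L0); nra.
have c1le : 1 - hi ^+ 2 * L ^+ 2 <= 1 - lam ^+ 2 * L ^+ 2.
  rewrite lerD2l lerN2; apply: ler_wpM2r; first exact: sqr_ge0.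
  have lam0 : 0 < lam := lt_le_trans l0 llo.
  rewrite !expr2; nra.
have c2 : 0 < 2 * lo * eta * mu by rewrite !mulr_gt0.
have c2le : 2 * lo * eta * mu <= 2 * lam * eta * mu.
  by rewrite !ler_pM2r // ler_pM2l.
rewrite /betak; apply: inv_le.
  apply: addr_gt0; rewrite invr_gt0 //; first exact: lt_le_trans c1le.
  exact: lt_le_trans c2le.
apply: lerD; exact: inv_le.
Qed.

Lemma pprev0 (R : realType) (b : nat -> R) : pprev b 0 = 1.
Proof. by rewrite /pprev big_ord0 invr1. Qed.

Lemma pprev_gt0 (R : realType) (b : nat -> R) j : (forall i, 0 < 1 - b i) -> 0 < pprev b j.
Proof. by move=> h; rewrite /pprev invr_gt0 prodr_gt0. Qed.

Lemma pprevS (R : realType) (b : nat -> R) j : (forall i, 0 < 1 - b i) ->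
  pprev b j.+1 * (1 - b j) = pprev b j.
Proof.
move=> h; rewrite /pprev big_ord_recr /= invfM -mulrA mulVf ?mulr1 //.
by rewrite gt_eqF.
Qed.

Lemma prod_le (R : realType) (b : nat -> R) be K : (forall i, 0 < 1 - b i) ->
  (forall i, 1 - b i <= 1 - be) -> \prod_(i < K) (1 - b i) <= (1 - be) ^+ K.
Proof.
move=> h1 h2.
rewrite -[K in _ ^+ K]card_ord -prodr_const.
by apply: ler_prod => i _; rewrite ltW ?h1 ?h2.
Qed.

End Aux.
Import Aux.

Theorem proposition4p10 (R : realType) (n : nat)
  (F H : 'rV[R]_n -> 'rV[R]_n) (DomF DomH X Om : set 'rV[R]_n)
  (PX POm : 'rV[R]_n -> 'rV[R]_n) (LF LH mu eta lam_lo lam_hi : R)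
  (alpha lambda : nat -> R) (x y : nat -> 'rV[R]_n) :
  (* F, H monotone, Lipschitz; H strongly monotone *)
  0 < LF -> 0 < LH -> 0 < mu ->
  ineq_monotone DomF F -> ineq_lipschitz DomF F LF ->
  ineq_monotone DomH H -> ineq_lipschitz DomH H LH ->
  ineq_smonotone DomH H mu ->
  (* X nonempty compact convex, Om nonempty closed convex, X ⊂ Om ⊂ DomF ∩ DomH *)
  X !=set0 -> vcompact X -> convex_set X ->
  Om !=set0 -> vclosed Om -> convex_set Om ->
  X `<=` Om -> Om `<=` DomF `&` DomH ->
  is_projection X PX -> is_projection Om POm ->
  VIsol F X !=set0 ->
  (* parameters *)
  0 < eta ->
  0 < lam_lo -> lam_lo <= lam_hi -> lam_hi < (LF + eta * LH)^-1 ->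
  (forall k, lam_lo <= lambda k <= lam_hi) ->
  (forall k, 0 <= alpha k) -> alpha 0%N <= 1 ->
  (forall k, alpha k.+1 <= (1 - betak (lambda k) (LF + eta * LH) eta mu) * alpha k) ->
  (* iterates: x_{-1} = x_0 ∈ X *)
  X (x 0%N) ->
  IneIREG F H PX POm alpha lambda (fun _ => eta) x y ->
  let L := LF + eta * LH in
  let beta_ := fun k => betak (lambda k) L eta mu in
  let beta := ((1 - lam_hi ^+ 2 * L ^+ 2)^-1 + (2 * lam_lo * eta * mu)^-1)^-1 in
  let Q := VIsol F X in
  forall k : nat, (1 <= k)%N ->
    - normbound H Q * setdist (ybar lambda eta beta_ y k) Q
      <= Gap (ybar lambda eta beta_ y k) H Q /\
    Gap (ybar lambda eta beta_ y k) H Q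
      <= (1 - beta) ^+ k / (2 * lam_lo * eta) *
         (setdiam X ^+ 2 + \sum_(j < k) pprev beta_ j * ineq_delta x alpha j).
Proof.
move=> LF0 LH0 mu0 monF lipF monH lipH smonH [x0 Xx0] cpX cvX _ clOm cvOm XOm OmD
  pX pOm [xs Qxs] eta0 lo0 lolh hiL lamb al0 al01 alrec Xx0' ite.
cbv zeta.
set b := (fun k => betak (lambda k) (LF + eta * LH) eta mu).
set bet := ((1 - lam_hi ^+ 2 * (LF + eta * LH) ^+ 2)^-1 + (2 * lam_lo * eta * (mu))^-1)^-1.
move=> K K1.
have L0 : 0 < LF + eta * LH by rewrite addr_gt0 // mulr_gt0.
have hiL' : lam_hi * (LF + eta * LH) < 1.
  have := hiL; rewrite -(ltr_pM2r L0) mulVf //; exact: lt0r_neq0.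
have lamj j : 0 < lambda j by apply: lt_le_trans lo0 _; case/andP: (lamb j).
have lamjh j : lambda j <= lam_hi by case/andP: (lamb j).
have lamjL j : lambda j ^+ 2 * (LF + eta * LH) ^+ 2 < 1.
  have h1 : lambda j * (LF + eta * LH) <= lam_hi * (LF + eta * LH) by rewrite ler_pM2r.
  have h2 : 0 < lambda j * (LF + eta * LH) by rewrite mulr_gt0.
  rewrite -exprMn expr2; nra.
have bj j : 0 < b j /\ b j < 1.
  apply: beta_bounds => //; apply: le_lt_trans hiL'; rewrite ler_pM2r //.
have bp j : 0 < 1 - b j by rewrite subr_gt0; case: (bj j).
have bmono j : bet <= b j.
  apply: beta_mono => //; by case/andP: (lamb j).
have Xxj : forall j, X (x j).
  elim=> [|j IH] //; have [_ ->] := ite j; match goal with |- X (PX ?z) => exact: (pX z).1 end.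
have Xyj : forall j, X (y j).
  move=> j; have [-> _] := ite j; match goal with |- X (PX ?z) => exact: (pX z).1 end.
have [Db hDb] := vcompact_bounded cpX.
set D := setdiam X.
have hD : forall u v, X u -> X v -> enorm (u - v) <= D.
  move=> u v Xu Xv.
  have hub : has_ubound [set r | exists x y, X x /\ X y /\ r = enorm (x - y)].
    by exists Db => r [a [c [Xa [Xc ->]]]]; exact: hDb.
  by apply: (ub_le_sup hub); exists u, v.
have D0 : 0 <= D := le_trans (enorm_ge0 _) (hD _ _ Xx0 Xx0).
have key : forall xq, VIsol F X xq ->
   2 * (\sum_(j < K) lambda j * eta * pk b j * dotp (H xq) (y j - xq))
     <= \sum_(j < K) pprev b j * ineq_delta x alpha j + D ^+ 2.
  move=> xq Qxq.
  have Xxq : X xq by case: Qxq.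
  have stp j := step (ltW LF0) (ltW LH0) mu0 eta0 (lamj j) (lamjL j) monF lipF lipH smonH
     cvX cvOm XOm OmD pX pOm Qxq (ite j).1 (ite j).2.
  have hA j : 0 <= dotp (x j - xq) (x j - xq) <= D ^+ 2.
    rewrite dotp_ge0 /= -enorm_sq.
    have := hD _ _ (Xxj j) Xxq; have := enorm_ge0 (x j - xq). nra.
  have := @telescope R (fun j => dotp (x j - xq) (x j - xq)) alpha b (ineq_delta x alpha)
     (fun j => lambda j * eta) (fun j => dotp (H xq) (y j - xq)) (pprev b) (D ^+ 2)
     hA al0 al01 (pprev0 b) (fun j => pprev_gt0 j bp) (fun j => pprevS j bp) bp alrec.
  have st : forall j, dotp (x j.+1 - xq) (x j.+1 - xq) <=
       (1 - b j) * ((1 + alpha j) * dotp (x j - xq) (x j - xq) - alpha j * dotp (x j.-1 - xq) (x j.-1 - xq)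
        + ineq_delta x alpha j) - 2 * (lambda j * eta) * dotp (H xq) (y j - xq).
    move=> j; rewrite /ineq_delta enorm_sq [2 * (_ * _)]mulrA; exact: stp j.
  move=> /(_ st K) /=.
  have PK := pprev_gt0 K bp.
  have [a0 aD] := andP (hA K.-1).
  have [b0 bD] := andP (hA K).
  have : 0 <= pprev b K * alpha K * (D ^+ 2 - dotp (x K.-1 - xq) (x K.-1 - xq)).
    by rewrite !mulr_ge0 ?subr_ge0 // ltW.
  have : 0 <= pprev b K * dotp (x K - xq) (x K - xq) by rewrite mulr_ge0 // ltW.
  rewrite /pk.
  lra.
have Xxs : X xs by case: Qxs.
move: K1 key; case: K => [//|K'] _ key.
set K := K'.+1.
set Lam := ineq_Lambda lambda eta b K.
have PKp j : 0 < pk b j by rewrite /pk; apply: pprev_gt0.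
have cpos j : 0 <= lambda j * eta * pk b j by rewrite !mulr_ge0 // ltW.
have LamK : lam_lo * eta * pprev b K <= Lam.
  rewrite /Lam /ineq_Lambda big_ord_recr /=.
  apply: ler_wpDl; first by apply: sumr_ge0 => j _; exact: cpos.
  rewrite /pk ler_pM2r ?pprev_gt0 // ler_pM2r //; by case/andP: (lamb K').
have lle0 : 0 < lam_lo * eta * pprev b K by rewrite !mulr_gt0 ?pprev_gt0.
have Lam0 : 0 < Lam := lt_le_trans lle0 LamK.
have invLam : Lam^-1 <= (1 - bet) ^+ K / (lam_lo * eta).
  apply: le_trans (inv_le lle0 LamK) _.
  rewrite invfM /pprev invrK mulrC ler_wpM2r //.
    by rewrite invr_ge0 mulr_ge0 // ltW.
  apply: prod_le => // i; rewrite lerD2l lerN2; exact: bmono.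
have inner xq : dotp (H xq) (ybar lambda eta b y K - xq)
    = Lam^-1 * \sum_(j < K) lambda j * eta * pk b j * dotp (H xq) (y j - xq).
  rewrite dotpBr /ybar -/Lam dotpZr dotp_sumr.
  under eq_bigr do rewrite dotpZr.
  under [in RHS]eq_bigr do rewrite dotpBr mulrBr.
  rewrite sumrB -mulr_suml -/(ineq_Lambda lambda eta b K) -/Lam.
  by field; rewrite gt_eqF.
have dl0 : 0 <= \sum_(j < K) pprev b j * ineq_delta x alpha j.
  apply: sumr_ge0 => j _; apply: mulr_ge0; first exact: ltW (pprev_gt0 j bp).
  rewrite /ineq_delta; apply: mulr_ge0; last exact: sqr_ge0.
  by apply: mulr_ge0 => //; apply: addr_ge0.
set T := \sum_(j < K) pprev b j * ineq_delta x alpha j in key dl0 *.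
have ub xq : VIsol F X xq -> dotp (H xq) (ybar lambda eta b y K - xq) <=
    (1 - bet) ^+ K / (2 * lam_lo * eta) * (D ^+ 2 + T).
  move=> Qxq; rewrite inner.
  have k2 := key xq Qxq.
  set S := \sum_(j < K) _ in k2 *.
  have h1 : Lam^-1 * S <= Lam^-1 * ((T + D ^+ 2) / 2).
    by apply: ler_wpM2l; [rewrite invr_ge0 ltW | lra].
  have h2 : Lam^-1 * ((T + D ^+ 2) / 2) <= (1 - bet) ^+ K / (lam_lo * eta) * ((T + D ^+ 2) / 2).
    apply: ler_wpM2r => //; have := sqr_ge0 D; lra.
  have e : (1 - bet) ^+ K / (lam_lo * eta) * ((T + D ^+ 2) / 2) = 
       (1 - bet) ^+ K / (2 * lam_lo * eta) * (D ^+ 2 + T).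
    by field; rewrite !gt_eqF.
  lra.
set yb := ybar lambda eta b y K.
set Q := VIsol F X.
set GS := [set r | exists x, Q x /\ r = dotp (H x) (yb - x)].
have GSub : has_ubound GS.
  by exists ((1 - bet) ^+ K / (2 * lam_lo * eta) * (D ^+ 2 + T)) => r [xq [Qxq ->]]; exact: ub.
have hG xq : Q xq -> dotp (H xq) (yb - xq) <= Gap yb H Q.
  by move=> Qxq; apply: (ub_le_sup GSub); exists xq.
set NS := [set r | exists x, Q x /\ r = enorm (H x)].
have NSub : has_ubound NS.
  exists (enorm (H xs) + LH * D) => r [xq [Qxq ->]].
  have Xxq : X xq by case: Qxq.
  have [_ DHq] := OmD _ (XOm _ Xxq).
  have [_ DHs] := OmD _ (XOm _ Xxs).
  have -> : H xq = H xs + (H xq - H xs) by rewrite addrC subrK.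
  apply: le_trans (enormD _ _) _; rewrite lerD2l.
  apply: le_trans (lipH _ _ DHq DHs) _; rewrite ler_pM2l //; exact: hD.
set Bh := normbound H Q.
have hB xq : Q xq -> enorm (H xq) <= Bh.
  by move=> Qxq; apply: (ub_le_sup NSub); exists xq.
have Bh0 : 0 <= Bh := le_trans (enorm_ge0 _) (hB _ Qxs).
have low xq : Q xq -> - Bh * enorm (yb - xq) <= Gap yb H Q.
  move=> Qxq; apply: le_trans (hG _ Qxq).
  have := CSn (H xq) (yb - xq); rewrite ler_norml => /andP[h _].
  apply: le_trans h; rewrite mulNr lerN2 ler_wpM2r ?enorm_ge0 //; exact: hB.
split; last first.
  rewrite /Gap -/GS; apply: ge_sup; first by exists (dotp (H xs) (yb - xs)), xs.
  by move=> r [xq [Qxq ->]]; exact: ub.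
have [B0|Bp] := eqVneq Bh 0.
  have := low _ Qxs; rewrite B0 !mulNr !mul0r !oppr0 => h.
  done.
have Bp' : 0 < Bh by rewrite lt_neqAle eq_sym Bp.
have hd : - Gap yb H Q / Bh <= setdist yb Q.
  apply: lb_le_inf; first by exists (enorm (yb - xs)), xs.
  move=> r [xq [Qxq ->]]; rewrite ler_pdivrMr // mulrC.
  have := low _ Qxq; lra.
have : Bh * (- Gap yb H Q / Bh) <= Bh * setdist yb Q by rewrite ler_pM2l.
have -> : Bh * (- Gap yb H Q / Bh) = - Gap yb H Q by field; rewrite gt_eqF.
lra.
Qed.
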